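(* Let $f:\mathbb R^n\to\mathbb R$ be a non-degenerate polynomial with $f(0)=0$, and write $\mathbf 1=(1,\dots,1)$. (i) If $\mathbf 1\notin\Gamma_+(f)$, then $L_e(f)>0$. (ii) If $\mathbf 1\in\Gamma(f)$, then $L_e(f)=0$ and $\Gamma^{(1)}_{\max}(f)\neq\emptyset$. (iii) If $\mathbf 1$ lies in the interior of $\Gamma_+(f)$, then $L_e(f)=0$ and $\Gamma^{(1)}_{\max}(f)=\emptyset$.
   Context: Write $f=\sum_\nu c_\nu x^\nu$. $\Gamma_+(f)$ (Newton polyhedron) is the convex hull of $\bigcup_{c_\nu\ne0}(\nu+\mathbb R^n_{\ge0})$; $\Gamma(f)$ (Newton boundary) is the union of its compact faces. For $a\in\mathbb R^n_{\ge0}$: $m_f(a)=\min\{\langle a,\nu\rangle:\nu\in\Gamma_+(f)\}$, $\gamma_f(a)=\{\nu\in\Gamma_+(f):\langle a,\nu\rangle=m_f(a)\}$, $s(a)=\sum_ia_i$, $h(a)=m_f(a)-s(a)$. For a face $\gamma$, $f_\gamma=\sum_{\nu\in\gamma}c_\nu x^\nu$; $f$ is non-degenerate if for every compact face $\gamma$, $\nabla f_\gamma$ does not vanish at points of $(\mathbb R^* )^n$ where $f_\gamma=0$. Dual Newton polyhedron: on $\mathbb R^n_{\ge0}$ put $a\sim b$ iff $\gamma_f(a)=\gamma_f(b)$; the equivalence classes give a subdivision of $\mathbb R^n_{\ge0}$ into cones. $\Gamma^{(1)}(f)$ is the set of primitive integer generators of the one-dimensional cones of this subdivision, and $\Gamma^{(1)}_+(f)=\{a\in\Gamma^{(1)}(f):m_f(a)>0\}$.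 The leading exponent is $L_e(f)=\sup\bigl(\{0\}\cup\{1-s(a)/m_f(a):a\in\Gamma^{(1)}_+(f)\}\bigr)$, and $\Gamma^{(1)}_{\max}(f)=\{a\in\Gamma^{(1)}_+(f):1-s(a)/m_f(a)=L_e(f)\}$. *)

(* Defs.v *)
From HB Require Import structures.
From mathcomp Require Import all_boot all_order all_algebra.
From mathcomp Require Import boolp classical_sets reals.
From mathcomp Require Import mpoly.
Set Implicit Arguments. Unset Strict Implicit. Unset Printing Implicit Defensive.
Import Order.TTheory GRing.Theory Num.Theory.
Local Open Scope ring_scope.

Section Newton.
Variables (R : realType) (n : nat).
Implicit Types (f : {mpoly R[n]}) (x y a b c : 'I_n -> R).

Definition dotR a x : R := \sum_(i < n) a i * x i.

Definition expR (m : 'X_{1..n}) : 'I_n -> R := fun i => (m i)%:R.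

Definition natR (a : 'I_n -> nat) : 'I_n -> R := fun i => (a i)%:R.

(* Newton polyhedron Gamma_+(f): convex hull of the union of the orthants
   nu + R^n_{>=0}, nu in the support of f, i.e. the points dominating
   (coordinatewise) a convex combination of support points. *)
Definition newton_plus f (x : 'I_n -> R) : Prop :=
  exists lam : 'X_{1..n} -> R,
    [/\ forall m, 0 <= lam m,
        \sum_(m <- msupp f) lam m = 1
      & forall i, \sum_(m <- msupp f) lam m * (m i)%:R <= x i].

Definition face f c (y : 'I_n -> R) : Prop :=
  newton_plus f y /\ forall z, newton_plus f z -> dotR c y <= dotR c z.

(* the face is non-empty and compact (it is closed; compact = bounded) *)
Definition compact_face f c : Prop :=
  (exists y, face f c y) /\
  exists B : R, forall y, face f c y -> forall i, `|y i| <= B.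

Definition newton_boundary f (x : 'I_n -> R) : Prop :=
  exists c, compact_face f c /\ face f c x.

Definition newton_interior f (x : 'I_n -> R) : Prop :=
  exists2 e : R, 0 < e &
    forall y, (forall i, `|y i - x i| < e) -> newton_plus f y.

Definition face_poly f c : {mpoly R[n]} :=
  \sum_(m <- msupp f | `[< face f c (expR m) >]) f@_m *: 'X_[m].

Definition nondegenerate_newton f : Prop :=
  forall c, compact_face f c ->
  forall x : 'I_n -> R, (forall i, x i != 0) ->
    (face_poly f c).@[x] = 0 -> exists i, (mderiv i (face_poly f c)).@[x] != 0.

Definition nonneg a : Prop := forall i, 0 <= a i.

(* m_f(a) = min { <a, nu> : nu in Gamma_+(f) }, for a >= 0 and f != 0;
   defined as the infimum of that set (it is attained). *)
Definition mf f a : R := inf [set dotR a x | x in newton_plus f].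

Definition gammaf f a (y : 'I_n -> R) : Prop :=
  newton_plus f y /\ dotR a y = mf f a.

Definition sR a : R := \sum_(i < n) a i.

(* Gamma^(1)(f): primitive integer generators of the one-dimensional cones
   of the dual Newton fan, i.e. of the equivalence classes of
   a ~ b <-> gamma_f(a) = gamma_f(b) on R^n_{>=0} which are open rays. *)
Definition dual1 f (a : 'I_n -> nat) : Prop :=
  [/\ exists i, a i != 0%N,
      \big[gcdn/0%N]_(i < n) a i = 1%N
    & forall b, nonneg b ->
        (forall y, gammaf f b y <-> gammaf f (natR a) y) ->
        exists2 t : R, 0 < t & b = (fun i => t * natR a i)].

Definition dual1_plus f (a : 'I_n -> nat) : Prop :=
  dual1 f a /\ 0 < mf f (natR a).

Definition ratio f (a : 'I_n -> nat) : R := 1 - sR (natR a) / mf f (natR a).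

Definition Le f : R :=
  sup [set r | r = 0 \/ exists a : 'I_n -> nat, dual1_plus f a /\ r = ratio f a].

Definition dual1_max f (a : 'I_n -> nat) : Prop :=
  dual1_plus f a /\ ratio f a = Le f.

End Newton.

(* Main.v *)
Require Import Defs.
From HB Require Import structures.
From mathcomp Require Import all_boot all_order all_algebra.
From mathcomp Require Import boolp classical_sets reals.
From mathcomp Require Import mpoly.
From mathcomp Require Import ring lra.
Set Implicit Arguments. Unset Strict Implicit. Unset Printing Implicit Defensive.
Import Order.TTheory GRing.Theory Num.Theory.
Local Open Scope ring_scope.

Section FM.
Variable R : realType.

Lemma In_cat (T : Type) (x : T) s1 s2 : List.In x (s1 ++ s2) <-> List.In x s1 \/ List.In x s2.
Proof. elim: s1 => [|y s IH] /=; first by split => [|[]] //; right.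
by rewrite IH; tauto. Qed.

Lemma In_filter (T : Type) (p : pred T) x s : List.In x (filter p s) <-> List.In x s /\ p x.
Proof. elim: s => [|y s IH] /=; first by split => [|[]].
case: ifP => py /=; rewrite IH; split.
- by case=> [<-|[]]; tauto.
- by case=> [[->|]]; tauto.
- by tauto.
- case=> [[E|H] px]; last by tauto.
  by move: py; rewrite E px.
Qed.

Lemma In_map (T U : Type) (f : T -> U) y s : List.In y (map f s) <-> exists x, List.In x s /\ y = f x.
Proof. elim: s => [|x s IH] /=; first by split => [[]|[x []]].
rewrite IH; split.
- by case=> [<-|[z [H ->]]]; [exists x; tauto| exists z; tauto].
- by case=> z [[<-|H] ->]; [left|right; exists z].
Qed.

Lemma In_allpairs (T U V : Type) (f : T -> U -> V) y s t :
  List.In y [seq f a b | a <- s, b <- t] <->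
  exists a b, [/\ List.In a s, List.In b t & y = f a b].
Proof. elim: s => [|a s IH] /=; first by split => [[]|[a [b [[]]]]].
rewrite In_cat In_map IH; split.
- by case=> [[b [H ->]]|[a' [b [H1 H2 ->]]]]; [exists a, b|exists a', b]; split => //; tauto.
- case=> a' [b [[<-|H1] H2 ->]]; first by left; exists b.
  by right; exists a', b.
Qed.

Lemma ex_max_in (T : Type) (F : T -> R) (s : seq T) : s <> [::] ->
  exists x, List.In x s /\ forall y, List.In y s -> F y <= F x.
Proof.
elim: s => [//|a s IH] _.
case: s IH => [|b s] IH.
  by exists a; split; [left|move=> y [<-|[]]].
have [//|x [Hx Hm]] := IH.
have [le|lt] := leP (F a) (F x).
- exists x; split; first by right.
  by move=> y [<-//|/Hm].
- exists a; split; first by left.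
  move=> y [<-//|/Hm H]; exact: (le_trans H (ltW lt)).
Qed.

Lemma ex_min_in (T : Type) (F : T -> R) (s : seq T) : s <> [::] ->
  exists x, List.In x s /\ forall y, List.In y s -> F x <= F y.
Proof.
move=> /(ex_max_in (fun x => - F x)) [x [Hx H]]; exists x; split => // y /H.
by rewrite lerN2.
Qed.

Lemma ex_between (T U : Type) (L : T -> R) (Up : U -> R) ls us :
  (forall a b, List.In a ls -> List.In b us -> L a <= Up b) ->
  exists t, (forall a, List.In a ls -> L a <= t) /\ (forall b, List.In b us -> t <= Up b).
Proof.
move=> H.
case: ls H => [|a0 ls] H.
  case: us H => [|b0 us] H; first by exists 0.
  have [//|b [_ Hb]] := @ex_min_in _ Up (b0 :: us).
  by exists (Up b); split.
have [//|a [Ha Hm]] := @ex_max_in _ L (a0 :: ls).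
by exists (L a); split => // b Hb; apply: H.
Qed.

Definition dotm (m : nat) (g x : nat -> R) := \sum_(i < m) g i * x i.

Definition cstr := ((nat -> R) * R)%type.

Definition feas m (S : seq cstr) x := forall c, List.In c S -> dotm m c.1 x <= c.2.

Inductive deriv (S : seq cstr) : (nat -> R) -> R -> Prop :=
| d_in g h : List.In (g, h) S -> deriv S g h
| d_add g1 h1 g2 h2 : deriv S g1 h1 -> deriv S g2 h2 -> deriv S (fun i => g1 i + g2 i) (h1 + h2)
| d_scale c g h : 0 <= c -> deriv S g h -> deriv S (fun i => c * g i) (c * h)
| d_weak g h h' : h <= h' -> deriv S g h -> deriv S g h'
| d_ext g g' h : (forall i, g i = g' i) -> deriv S g h -> deriv S g' h.

Lemma deriv_trans S S' : (forall c, List.In c S' -> deriv S c.1 c.2) ->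
  forall g h, deriv S' g h -> deriv S g h.
Proof.
move=> HS g h; elim => {g h}.
- by move=> g h /HS.
- by move=> *; apply: d_add.
- by move=> *; apply: d_scale.
- by move=> g h h' le _ H; apply: d_weak le H.
- by move=> g g' h E _ H; apply: d_ext E H.
Qed.

Lemma deriv_coord0 S k : (forall c, List.In c S -> c.1 k = 0) ->
  forall g h, deriv S g h -> g k = 0.
Proof.
move=> HS g h; elim => {g h}.
- by move=> g h /HS.
- by move=> g1 h1 g2 h2 _ -> _ ->; rewrite addr0.
- by move=> c g h _ _ ->; rewrite mulr0.
- by [].
- by move=> g g' h E _ H; rewrite -E.
Qed.

Lemma dotm_recr m g x : dotm m.+1 g x = dotm m g x + g m * x m.
Proof. by rewrite /dotm big_ord_recr. Qed.

Lemma dotm_eq m g x y : (forall i, (i < m)%N -> x i = y i) -> dotm m g x = dotm m g y.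
Proof. by move=> E; apply: eq_bigr => i _; rewrite E. Qed.

Lemma dotm_comb m c1 c2 g1 g2 x :
  dotm m (fun i => c1 * g1 i + c2 * g2 i) x = c1 * dotm m g1 x + c2 * dotm m g2 x.
Proof.
rewrite /dotm !mulr_sumr -big_split; apply: eq_bigr => i _ /=; ring.
Qed.

Definition comb (m : nat) (p q : cstr) : cstr :=
  (fun i => - q.1 m * p.1 i + p.1 m * q.1 i, - q.1 m * p.2 + p.1 m * q.2).

Theorem FM m (S : seq cstr) : (forall x, ~ feas m S x) ->
  exists g h, [/\ deriv S g h, (forall i, (i < m)%N -> g i = 0) & h < 0].
Proof.
elim: m S => [|m IH] S Hinf.
  have : ~ forall c, List.In c S -> 0 <= c.2.
    move=> H; apply: (Hinf (fun _ => 0)) => c Hc; rewrite /dotm big_ord0; exact: H.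
  move=> /existsNP [c /not_implyP [Hc /negP]]; rewrite -ltNge => lt.
  exists c.1, c.2; split => //; first by case: c Hc {lt} => g h; apply: d_in.
set P := filter (fun c : cstr => 0 < c.1 m) S.
set N := filter (fun c : cstr => c.1 m < 0) S.
set Z := filter (fun c : cstr => c.1 m == 0) S.
set S' := Z ++ [seq comb m p q | p <- P, q <- N].
have HS' : forall c, List.In c S' -> deriv S c.1 c.2.
  move=> c; rewrite In_cat In_filter In_allpairs.
  case=> [[Hc _]|[p [q [Hp Hq ->]]]]; first by case: c Hc => g h; apply: d_in.
  move: Hp Hq; rewrite !In_filter => -[Hp pp] [Hq qn] /=.
  apply: d_add; apply: d_scale.
  + by rewrite oppr_ge0 ltW.
  + by case: p Hp {pp} => g h /= ?; apply: d_in.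
  + exact: ltW.
  + by case: q Hq {qn} => g h /= ?; apply: d_in.
have Hinf' : forall x, ~ feas m S' x.
  move=> x' Hx'.
  pose d := fun c : cstr => dotm m c.1 x'.
  have Hb : forall q p, List.In q N -> List.In p P ->
      (q.2 - d q) / q.1 m <= (p.2 - d p) / p.1 m.
    move=> q p Hq Hp.
    have H : List.In (comb m p q) S'.
      by rewrite In_cat In_allpairs; right; exists p, q.
    move: (Hx' _ H); rewrite /comb /= dotm_comb => Hc.
    move: Hq Hp; rewrite !In_filter => -[_ qn] [_ pp].
    rewrite ler_pdivlMr // mulrAC ler_ndivrMr //; rewrite /d; lra.
  have [t [Ht1 Ht2]] := ex_between Hb.
  apply: (Hinf (fun i => if i == m then t else x' i)) => c Hc.
  rewrite dotm_recr (@dotm_eq _ _ _ x'); last first.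
    by move=> i lt; rewrite ifN // neq_ltn lt.
  rewrite eqxx.
  case: (ltrgtP (c.1 m) 0) => [neg|pos|z].
  - have : List.In c N by rewrite In_filter.
    move=> /Ht1; rewrite ler_ndivrMr // /d; lra.
  - have : List.In c P by rewrite In_filter.
    move=> /Ht2; rewrite ler_pdivlMr // /d; lra.
  - have : List.In c S' by rewrite In_cat In_filter z eqxx; left.
    move=> /Hx'; rewrite z; lra.
have [g [h [Hd Hg Hh]]] := IH S' Hinf'.
exists g, h; split => //.
- exact: deriv_trans Hd.
- move=> i; rewrite ltnS leq_eqVlt => /orP [/eqP ->|]; last exact: Hg.
  apply: (deriv_coord0 _ Hd) => c; rewrite In_cat In_filter In_allpairs.
  case=> [[_ /eqP //]|[p [q [_ _ ->]]]] /=; ring.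
Qed.

End FM.

Section Dot.
Variables (R : realType) (n : nat).
Implicit Types (a b c d x : 'I_n -> R).

Lemma dotR_linr c a d t : dotR c (fun j => a j + t * d j) = dotR c a + t * dotR c d.
Proof. by rewrite /dotR mulr_sumr -big_split; apply: eq_bigr => i _ /=; ring. Qed.

Lemma dotR_linl c a d t : dotR (fun j => a j + t * d j) c = dotR a c + t * dotR d c.
Proof. by rewrite /dotR mulr_sumr -big_split; apply: eq_bigr => i _ /=; ring. Qed.

Lemma dotRC a b : dotR a b = dotR b a.
Proof. by apply: eq_bigr => i _; rewrite mulrC. Qed.

Lemma dotR_unit (i : 'I_n) c d : (forall j, c j = (i == j)%:R) -> dotR c d = d i.
Proof.
move=> E; rewrite /dotR (bigD1 i) //= big1 ?addr0; first by rewrite E eqxx mul1r.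
by move=> j ji; rewrite E eq_sym (negbTE ji) mul0r.
Qed.

Lemma dotR_ge0 a b : (forall i, 0 <= a i) -> (forall i, 0 <= b i) -> 0 <= dotR a b.
Proof. by move=> Ha Hb; apply: sumr_ge0 => i _; apply: mulr_ge0. Qed.

Lemma neg_coord d p : (forall i, 0 < p i) -> dotR d p <= 0 -> (exists i, d i != 0) ->
  exists i, d i < 0.
Proof.
move=> Hp Hd [i0 Hi0]; apply: contrapT => Hn.
have Hge : forall i, 0 <= d i.
  by move=> i; rewrite leNgt; apply/negP => Hlt; apply: Hn; exists i.
have H0 : dotR d p = 0 by apply/eqP; rewrite eq_le Hd dotR_ge0 // => i; exact: ltW.
move/eqP: H0; rewrite psumr_eq0 /=; last by move=> i _; rewrite mulr_ge0 // ltW.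
move=> /allP /(_ i0 (mem_index_enum _)) /=; rewrite mulf_eq0 (negbTE Hi0) /=.
by rewrite gt_eqF.
Qed.

End Dot.

Lemma In_mem (T : eqType) (x : T) s : x \in s -> List.In x s.
Proof. elim: s => [//|y s IH]; rewrite inE => /orP [/eqP ->|/IH]; [left|right] => //. Qed.

Section Vert.
Variables (R : realType) (n K : nat) (g : 'I_K -> 'I_n -> R) (h : 'I_K -> R).

Definition feasA (a : 'I_n -> R) := forall k, h k <= dotR (g k) a.
Definition tight (a : 'I_n -> R) k := dotR (g k) a == h k.
Definition vertexA (a : 'I_n -> R) := forall d : 'I_n -> R,
  (forall k, tight a k -> dotR (g k) d = 0) -> forall i, d i = 0.

Hypothesis He : forall i, exists k, (forall j, g k j = (i == j)%:R) /\ h k = 0.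
Variable p : 'I_n -> R.
Hypothesis Hp : forall i, 0 < p i.

Let nt a := [set k | ~~ tight a k].

Lemma vertex_step a : ~ vertexA a -> feasA a ->
  exists a', [/\ feasA a', (#|nt a'| < #|nt a|)%N & dotR a' p <= dotR a p].
Proof.
move=> nV Ha.
have [d0 [Hk0 Hi0]] : exists d, (forall k, tight a k -> dotR (g k) d = 0) /\ exists i, d i != 0.
  apply: contrapT => H; apply: nV => d Hd i; apply: contrapT => /eqP Hdi.
  by apply: H; exists d; split => //; exists i.
have [d [Hk Hdp [i1 Hi1]]] : exists d, [/\ (forall k, tight a k -> dotR (g k) d = 0),
    dotR d p <= 0 & exists i, d i < 0].
  have [le|lt] := leP (dotR d0 p) 0.
    by exists d0; split => //; apply: neg_coord.
  exists (fun j => - d0 j); split.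
  - move=> k /Hk0 H; rewrite /dotR (eq_bigr (fun j => - (g k j * d0 j))).
      by rewrite sumrN -/(dotR _ _) H oppr0.
    by move=> j _; rewrite mulrN.
  - have -> : dotR (fun j => - d0 j) p = - dotR d0 p.
      by rewrite /dotR -sumrN; apply: eq_bigr => j _; rewrite mulNr.
    by rewrite oppr_le0 ltW.
  - apply: neg_coord => //.
    + have -> : dotR (fun j => - d0 j) p = - dotR d0 p.
        by rewrite /dotR -sumrN; apply: eq_bigr => j _; rewrite mulNr.
      by rewrite oppr_le0 ltW.
    + by case: Hi0 => i Hi; exists i; rewrite oppr_eq0.
pose B := [seq k <- enum 'I_K | dotR (g k) d < 0].
pose F k := (dotR (g k) a - h k) / (- dotR (g k) d).
have [k1 [Hk1 Hk1h]] := He i1.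
have HB : B <> [::].
  have : k1 \in B by rewrite mem_filter mem_enum (dotR_unit _ Hk1) Hi1.
  by move=> H E; rewrite E in H.
have [k0 [Hk0B Hmin]] := ex_min_in F HB.
move: (Hk0B); rewrite In_filter => -[_ gd0].
pose t := F k0.
have t0 : 0 <= t.
  by apply: divr_ge0; [rewrite subr_ge0; exact: Ha| rewrite oppr_ge0 ltW].
exists (fun j => a j + t * d j); split.
- move=> k; rewrite dotR_linr.
  have [ge|lt] := leP 0 (dotR (g k) d).
    by have := Ha k; have := mulr_ge0 t0 ge; lra.
  have : List.In k B by rewrite In_filter; split => //; apply: In_mem; rewrite mem_enum.
  move=> /Hmin; rewrite -/t /F ler_pdivlMr; last by rewrite oppr_gt0.
  lra.
- apply: proper_card; rewrite /nt; apply/properP; split.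
  + apply/fintype.subsetP => k; rewrite !inE; apply: contra => Hkt.
    by rewrite /tight dotR_linr (Hk _ Hkt) mulr0 addr0.
  + exists k0; rewrite !inE.
    * by apply/negP => /Hk /eqP; rewrite lt_eqF.
    * rewrite negbK /tight dotR_linr /t /F; apply/eqP; field.
      by rewrite lt_eqF.
- rewrite dotR_linl.
  have : t * dotR d p <= 0 by rewrite mulr_ge0_le0.
  lra.
Qed.

Lemma vertex_move a0 : feasA a0 ->
  exists a, [/\ feasA a, vertexA a & dotR a p <= dotR a0 p].
Proof.
suff H : forall N a, (#|nt a| <= N)%N -> feasA a ->
    exists a', [/\ feasA a', vertexA a' & dotR a' p <= dotR a p].
  exact: (H _ a0 (leqnn _)).
elim=> [|N IH] a Hc Ha.
  have [V|nV] := pselect (vertexA a); first by exists a.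
  have [a' [_ lt _]] := vertex_step nV Ha.
  by move: (leq_trans lt Hc).
have [V|nV] := pselect (vertexA a); first by exists a.
have [a' [Ha' lt le]] := vertex_step nV Ha.
have [a'' [H1 H2 H3]] := IH a' (leq_trans lt Hc) Ha'.
by exists a''; split => //; apply: le_trans le.
Qed.

End Vert.

Section Rat.
Variables (R : realType) (n K : nat) (G : 'I_K -> 'I_n -> nat) (H : 'I_K -> nat).
Let g k j : R := (G k j)%:R.
Let h k : R := (H k)%:R.

Lemma vertex_rat a : vertexA g h a -> exists q : 'I_n -> rat, forall j, a j = ratr (q j).
Proof.
move=> V.
pose tk k := tight g h a k.
pose TQ : 'M[rat]_(K, n) := \matrix_(k, j) (if tk k then (G k j)%:R else 0).
pose rQ : 'M[rat]_(1, K) := \row_k (if tk k then (H k)%:R else 0).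
pose A : 'M[R]_(1, n) := \row_j a j.
have E1 : map_mx ratr rQ = A *m (map_mx ratr TQ)^T.
  apply/matrixP => i k; rewrite !mxE ord1 /=.
  rewrite (eq_bigr (fun j => if tk k then a j * g k j else 0)); last first.
    by move=> j _; rewrite !mxE; case: (tk k); rewrite ?ratr_nat ?rmorph0 ?mulr0.
  case E: (tk k); last by rewrite rmorph0 big1.
  rewrite ratr_nat -[(H k)%:R]/(h k); move/eqP: E => <-; rewrite dotRC.
  by apply: eq_bigr.
have Hs : (map_mx ratr rQ <= (map_mx (ratr : rat -> R) TQ^T))%MS.
  by rewrite -map_trmx E1 submxMl.
move: Hs; rewrite map_submx => /submxP [D ED].
exists (fun j => D 0 j) => j.
have Hd := V (fun j => a j - ratr (D 0 j)).
apply/eqP; rewrite -subr_eq0; apply/eqP; apply: Hd => k Tk.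
have Ek : rQ 0 k = (D *m TQ^T) 0 k by rewrite -ED.
move: Ek; rewrite !mxE /=.
rewrite /tk in Tk *; rewrite Tk => Ek.
rewrite /dotR (eq_bigr (fun j => g k j * a j - ratr (D 0 j * (G k j)%:R))); last first.
  by move=> j' _; rewrite rmorphM rmorph_nat /g; ring.
rewrite sumrB -rmorph_sum.
have Ek' : (H k)%:R = \sum_j D 0 j * (G k j)%:R :> rat.
  rewrite Ek; apply: eq_bigr => j' _; by rewrite !mxE /= (_ : tk k = true).
rewrite -Ek' rmorph_nat.
by move/eqP: Tk; rewrite /dotR => ->; rewrite subrr.
Qed.

End Rat.

Section Scale.
Variables (R : realType) (n : nat).

Lemma rat_to_nat (q : 'I_n -> rat) : (forall j, 0 <= q j) ->
  exists (w : 'I_n -> nat) (s : R), 0 < s /\ forall j, (w j)%:R = s * ratr (q j).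
Proof.
move=> Hq.
pose D : int := \prod_j denq (q j).
pose P j : int := \prod_(j' | j' != j) denq (q j').
have HP : forall j, 0 < P j by move=> j; apply: prodr_gt0 => j' _; exact: denq_gt0.
have HD : 0 < D by apply: prodr_gt0 => j' _; exact: denq_gt0.
pose w j : int := numq (q j) * P j.
have Hw0 : forall j, 0 <= w j by move=> j; rewrite mulr_ge0 ?numq_ge0 // ltW.
have Hw : forall j, (w j)%:~R = q j * D%:~R :> rat.
  by move=> j; rewrite /D (bigD1 j) //= intrM (intrM _ (denq _)) mulrA -numqE.
exists (fun j => `|w j|%N), (D%:~R); split; first by rewrite ltr0z.
move=> j; rewrite natr_absz ger0_norm //.
have := congr1 (@ratr R) (Hw j); rewrite ratr_int (rmorphM (ratr : {rmorphism rat -> R})) rmorph_int => ->.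
by rewrite mulrC.
Qed.

Lemma nat_primitive (w : 'I_n -> nat) : (exists i, w i != 0%N) ->
  exists (u : 'I_n -> nat) (t : R), [/\ 0 < t, forall j, (u j)%:R = t * (w j)%:R,
     \big[gcdn/0%N]_(i < n) u i = 1%N & exists i, u i != 0%N].
Proof.
move=> [i0 Hi0].
pose G0 := \big[gcdn/0%N]_(i < n) w i.
have HG : forall i, (G0 %| w i)%N.
  by move=> i; have /dvdn_biggcdP := dvdnn G0; apply.
have G0p : (0 < G0)%N.
  rewrite lt0n; apply/negP => /eqP E; have := HG i0; rewrite E dvd0n.
  by rewrite (negbTE Hi0).
pose u i := (w i %/ G0)%N.
have Hu : forall i, (u i * G0)%N = w i by move=> i; rewrite divnK.
exists u, (G0%:R)^-1; split.
- by rewrite invr_gt0 ltr0n.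
- move=> j; rewrite -(Hu j) natrM mulrCA mulVf ?mulr1 //.
  by rewrite pnatr_eq0 -lt0n.
- pose g1 := \big[gcdn/0%N]_(i < n) u i.
  have Hg1 : forall i, (g1 %| u i)%N.
    by move=> i; have /dvdn_biggcdP := dvdnn g1; apply.
  have : (g1 * G0 %| G0)%N.
    apply/dvdn_biggcdP => i _; rewrite -Hu; exact: dvdn_mul.
  have ui0 : u i0 != 0%N by apply/negP => /eqP E; move: (Hu i0); rewrite E mul0n => E'; rewrite -E' eqxx in Hi0.
  have g1p : (0 < g1)%N.
    rewrite lt0n; apply/negP => /eqP E; have := Hg1 i0; rewrite E dvd0n.
    by rewrite (negbTE ui0).
  move=> /(dvdn_leq G0p); rewrite -[X in (_ <= X)%N]mul1n leq_pmul2r //.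
  by move=> le; apply/eqP; rewrite eqn_leq le g1p.
- exists i0; apply/negP => /eqP E; move: (Hu i0); rewrite E mul0n => E'.
  by rewrite -E' eqxx in Hi0.
Qed.

End Scale.

Section Newt.
Variables (R : realType) (n : nat) (f : {mpoly R[n]}).
Local Notation s := (msupp f).
Local Notation NP := (newton_plus f).
Local Notation eR := (expR R).

Lemma NP_mono x y : NP x -> (forall i, x i <= y i) -> NP y.
Proof.
move=> [lam [H1 H2 H3]] Hxy; exists lam; split => // i; exact: le_trans (H3 i) (Hxy i).
Qed.

Lemma NP_supp m : m \in s -> NP (eR m).
Proof.
move=> Hm; exists (fun m' => (m' == m)%:R); split.
- by move=> m'; rewrite ler0n.
- rewrite (bigD1_seq m) //= ?msupp_uniq // eqxx big1 ?addr0 //.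
  by move=> m' /negbTE ->.
- move=> i; rewrite (bigD1_seq m) //= ?msupp_uniq // eqxx mul1r big1 ?addr0 //.
  by move=> m' /negbTE ->; rewrite mul0r.
Qed.

Lemma NP_ge a c x : nonneg a -> (forall m, m \in s -> c <= dotR a (eR m)) ->
  NP x -> c <= dotR a x.
Proof.
move=> Ha Hc [lam [H1 H2 H3]].
apply: (@le_trans _ _ (\sum_(m <- s) lam m * dotR a (eR m))).
  rewrite -[c]mul1r -H2 mulr_suml !big_seq; apply: ler_sum => m Hm.
  by apply: ler_wpM2l; [exact: H1|exact: Hc].
rewrite /dotR; under eq_bigr => m _ do rewrite mulr_sumr.
rewrite exchange_big /=; apply: ler_sum => i _.
rewrite (eq_bigr (fun m => a i * (lam m * (m i)%:R))); last by move=> m _ /=; rewrite /expR; ring.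
by rewrite -mulr_sumr; apply: ler_wpM2l; [exact: Ha|exact: H3].
Qed.

Lemma NP_nonneg x i : NP x -> 0 <= x i.
Proof.
move=> [lam [H1 H2 H3]]; apply: le_trans (H3 i); apply: sumr_ge0 => m _.
by apply: mulr_ge0; rewrite ?ler0n.
Qed.

Lemma mf_le a x : nonneg a -> NP x -> mf f a <= dotR a x.
Proof.
move=> Ha Hx; apply: ge_inf; last by exists x.
exists 0 => y [z Hz <-]; apply: dotR_ge0 => // i; exact: NP_nonneg.
Qed.

Lemma mf_val a c m0 : nonneg a -> m0 \in s -> dotR a (eR m0) = c ->
  (forall m, m \in s -> c <= dotR a (eR m)) -> mf f a = c.
Proof.
move=> Ha Hm0 E Hc; apply/eqP; rewrite eq_le; apply/andP; split.
  by rewrite -E; apply: mf_le => //; exact: NP_supp.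
apply: lb_le_inf; first by exists c, (eR m0) => //; exact: NP_supp.
by move=> y [z Hz <-]; apply: NP_ge.
Qed.

Lemma mf_ge0 a : nonneg a -> f != 0 -> 0 <= mf f a.
Proof.
move=> Ha Hf; apply: lb_le_inf.
  case E: s => [|m0 t]; first by move/eqP: E; rewrite msupp_eq0 (negbTE Hf).
  by exists (dotR a (eR m0)), (eR m0) => //; apply: NP_supp; rewrite E mem_head.
by move=> y [z Hz <-]; apply: dotR_ge0 => // i; exact: NP_nonneg.
Qed.

Definition Gnat (k : 'I_(size s + n)) (j : 'I_n) : nat :=
  match split k with inl j' => nth 0%MM s j' j | inr i => nat_of_bool (i == j) end.
Definition Hnat (k : 'I_(size s + n)) : nat :=
  match split k with inl _ => 1%N | inr _ => 0%N end.
Definition gR := fun k j => (Gnat k j)%:R : R.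
Definition hR := fun k => (Hnat k)%:R : R.

Lemma split_l (j : 'I_(size s)) : split (lshift n j) = inl j.
Proof. exact: (unsplitK (inl j)). Qed.
Lemma split_r (i : 'I_n) : split (rshift (size s) i) = inr i.
Proof. exact: (unsplitK (inr i)). Qed.

Lemma dot_l j a : dotR (gR (lshift n j)) a = dotR a (eR (nth 0%MM s j)).
Proof. by rewrite dotRC; apply: eq_bigr => i _; rewrite /gR /Gnat split_l. Qed.
Lemma h_l j : hR (lshift n j) = 1.
Proof. by rewrite /hR /Hnat split_l. Qed.
Lemma g_r i j : gR (rshift (size s) i) j = (i == j)%:R.
Proof. by rewrite /gR /Gnat split_r. Qed.
Lemma h_r i : hR (rshift (size s) i) = 0.
Proof. by rewrite /hR /Hnat split_r. Qed.

Lemma He_sys : forall i, exists k, (forall j, gR k j = (i == j)%:R) /\ hR k = 0.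
Proof. by move=> i; exists (rshift (size s) i); split; [exact: g_r|exact: h_r]. Qed.

Lemma feas_iff a : feasA gR hR a <->
  nonneg a /\ (forall m, m \in s -> 1 <= dotR a (eR m)).
Proof.
split.
- move=> H; split.
  + by move=> i; have := H (rshift (size s) i); rewrite h_r (dotR_unit _ (g_r i)).
  + move=> m Hm; have Hi : (index m s < size s)%N by rewrite index_mem.
    have := H (lshift n (Ordinal Hi)).
    by rewrite h_l dot_l /= nth_index.
- move=> [Ha Hm] k; case: (split_ordP k) => [j ->|i ->].
  + by rewrite h_l dot_l; apply: Hm; rewrite mem_nth.
  + by rewrite h_r (dotR_unit _ (g_r i)).
Qed.

Lemma s_nonempty : f != 0 -> exists m, m \in s.
Proof.
move=> Hf; case E: s => [|m0 t]; first by move/eqP: E; rewrite msupp_eq0 (negbTE Hf).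
by exists m0; rewrite mem_head.
Qed.

Lemma tight_cases a k : tight gR hR a k ->
  (exists2 m, m \in s & dotR a (eR m) = 1 /\ forall d, dotR (gR k) d = dotR d (eR m))
  \/ (exists i, a i = 0 /\ forall d, dotR (gR k) d = d i).
Proof.
rewrite /tight; case: (split_ordP k) => [j ->|i ->].
- rewrite dot_l h_l => /eqP E; left; exists (nth 0%MM s j); first by rewrite mem_nth.
  by split => // d; rewrite dot_l.
- rewrite h_r (dotR_unit _ (g_r i)) => /eqP E; right; exists i; split => // d.
  exact: (dotR_unit _ (g_r i)).
Qed.

Lemma dot_e (a : 'I_n -> R) (i : 'I_n) : dotR a (fun j => (i == j)%:R) = a i.
Proof. by rewrite dotRC (dotR_unit _ (fun j => erefl _)). Qed.

Lemma vertex_ray (Hf0 : f != 0) a : feasA gR hR a -> vertexA gR hR a ->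
  [/\ mf f a = 1, exists2 m0, m0 \in s & dotR a (eR m0) = 1, exists j, 0 < a j &
     forall b, nonneg b -> (forall y, gammaf f b y <-> gammaf f a y) ->
       exists2 t, 0 < t & forall i, b i = t * a i].
Proof.
move=> Hfe V; have [Ha Hm] := (feas_iff a).1 Hfe.
have [m0 Hm0 E0] : exists2 m0, m0 \in s & dotR a (eR m0) = 1.
  apply: contrapT => Hn.
  have Z : forall i, a i = 0.
    apply: V => k /tight_cases [[m Hm' [E _]]|[i [Ei Hd]]].
    + by exfalso; apply: Hn; exists m.
    + by rewrite Hd.
  have [m Hms] := s_nonempty Hf0; have := Hm m Hms.
  by rewrite /dotR big1 ?ler10 // => i _; rewrite Z mul0r.
have Mf : mf f a = 1 by apply: (mf_val Ha Hm0 E0).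
have [j0 Hj0] : exists j, 0 < a j.
  apply: contrapT => Hn.
  have Z : forall i, a i = 0.
    move=> i; apply/eqP; rewrite eq_le Ha andbT leNgt; apply/negP => H; apply: Hn; by exists i.
  have S0 : dotR a (eR m0) = 0 by rewrite /dotR big1 // => i _; rewrite Z mul0r.
  by move: E0; rewrite S0 => /eqP; rewrite eq_sym oner_eq0.
split => //; first by exists m0.
  by exists j0.
move=> b Hb Hg.
pose ey i := fun j => eR m0 j + 1 * (i == j)%:R.
have NPey : forall i, NP (ey i).
  by move=> i; apply: (NP_mono (NP_supp Hm0)) => j; rewrite /ey lerDl mul1r ler0n.
have dot_ey : forall c i, dotR c (ey i) = dotR c (eR m0) + c i.
  by move=> c i; rewrite /ey dotR_linr mul1r dot_e.
have Gm : forall m, m \in s -> dotR a (eR m) = 1 -> dotR b (eR m) = mf f b.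
  move=> m Hms Em; have : gammaf f a (eR m) by split; [exact: NP_supp|rewrite Mf].
  by move/Hg => [].
have Gb0 : forall i, a i = 0 -> b i = 0.
  move=> i Ai; have : gammaf f a (ey i) by split => //; rewrite dot_ey E0 Ai addr0.
  move/Hg => [_]; rewrite dot_ey (Gm _ Hm0 E0); lra.
have Hbd : forall i, b i + - mf f b * a i = 0.
  apply: V => k /tight_cases [[m Hms [Em Hd]]|[i [Ai Hd]]].
  + rewrite Hd dotRC dotR_linr !(dotRC (eR m)) Em (Gm _ Hms Em); ring.
  + by rewrite Hd Ai (Gb0 _ Ai) mulr0 addr0.
have Hbt : forall i, b i = mf f b * a i.
  by move=> i; have := Hbd i; lra.
exists (mf f b) => //.
have := mf_ge0 Hb Hf0; rewrite le0r => /orP [/eqP Z|//].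
exfalso.
have : gammaf f b (ey j0).
  split => //; rewrite Z /dotR big1 // => i _; rewrite Hbt Z mul0r mul0r.
  by [].
move/Hg => [_]; rewrite dot_ey E0 Mf; lra.
Qed.

Lemma build (Hf0 : f != 0) a : feasA gR hR a -> vertexA gR hR a ->
  exists u : 'I_n -> nat, dual1_plus f u /\ Defs.ratio f u = 1 - sR a.
Proof.
move=> Hfe V.
have [Mf [m0 Hm0 E0] [j0 Hj0] Ray] := vertex_ray Hf0 Hfe V.
have [Ha Hm] := (feas_iff a).1 Hfe.
have [q Hq] := vertex_rat (V : vertexA (fun k j => (Gnat k j)%:R) (fun k => (Hnat k)%:R) a).
have Hq0 : forall j, 0 <= q j by move=> j; rewrite -(ler0q R) -Hq.
have [w [s0 [Hs0 Hw]]] := rat_to_nat R Hq0.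
have Hwnz : exists i, w i != 0%N.
  exists j0; rewrite -(pnatr_eq0 R) Hw -Hq; apply/negP => /eqP.
  by move/eqP; rewrite mulf_eq0 (gt_eqF Hs0) (gt_eqF Hj0).
have [u [t [Ht Hu Hgcd Hnz]]] := nat_primitive R Hwnz.
pose c := t * s0.
have Hc : 0 < c by rewrite mulr_gt0.
have Nu : forall i, natR R u i = c * a i.
  by move=> i; rewrite /natR Hu Hw -Hq /c mulrA.
have DU : forall x, dotR (natR R u) x = c * dotR a x.
  by move=> x; rewrite /dotR mulr_sumr; apply: eq_bigr => i _; rewrite Nu mulrA.
have Nn : nonneg (natR R u) by move=> i; rewrite /natR ler0n.
have Mfu : mf f (natR R u) = c.
  apply: (mf_val Nn Hm0); first by rewrite DU E0 mulr1.
  move=> m Hms; rewrite DU -[X in X <= _]mulr1.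
  by apply: ler_wpM2l; [exact: ltW|exact: Hm].
have Geq : forall y, gammaf f (natR R u) y <-> gammaf f a y.
  move=> y; rewrite /gammaf Mfu Mf DU; split => -[H1 H2]; split => //.
    by apply: (mulfI (lt0r_neq0 Hc)); rewrite H2 mulr1.
  by rewrite H2 mulr1.
exists u; split; last first.
  rewrite /Defs.ratio Mfu.
  have -> : sR (natR R u) = c * sR a.
    by rewrite /sR mulr_sumr; apply: eq_bigr => i _; rewrite Nu.
  by field; exact: lt0r_neq0.
split; last by rewrite Mfu.
split => //.
move=> b Hb Hgb.
have [t' Ht' Hbt] : exists2 t', 0 < t' & forall i, b i = t' * a i.
  by apply: Ray => // y; rewrite Hgb Geq.
exists (t' / c); first by rewrite divr_gt0.
apply: funext => i; rewrite Hbt Nu; field; exact: lt0r_neq0.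
Qed.

End Newt.

Section Farkas.
Variables (R : realType) (n : nat) (f : {mpoly R[n]}).
Local Notation s := (msupp f).
Local Notation N := (size (msupp f)).
Local Notation NP := (newton_plus f).
Local Notation eR := (expR R).

Definition Ssys : seq (cstr R) :=
  [seq (fun k => - (k == j)%:R, 0) | j <- iota 0 N] ++
  [:: (fun _ => 1, 1); (fun _ => -1, -1)] ++
  [seq (fun j => ((nth 0%MM s j) i)%:R, 1) | i <- enum 'I_n].

Lemma sum_seq_ord (F : 'X_{1..n} -> R) :
  \sum_(m <- s) F m = \sum_(j < N) F (nth 0%MM s j).
Proof. by rewrite (big_nth 0%MM) big_mkord. Qed.

Lemma dotm_e (x : nat -> R) j : (j < N)%N -> dotm N (fun k => - (k == j)%:R) x = - x j.
Proof.
move=> Hj; rewrite /dotm (bigD1 (Ordinal Hj)) //= eqxx mulNr mul1r big1 ?addr0 //.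
move=> i /negbTE Hi; rewrite -(inj_eq val_inj) /= in Hi.
by rewrite Hi oppr0 mul0r.
Qed.

Lemma infeas : ~ NP (fun _ => 1) -> forall x, ~ feas N Ssys x.
Proof.
move=> nNP x Hx; apply: nNP.
have In1 : forall c, List.In c Ssys -> dotm N c.1 x <= c.2 := Hx.
have Hx0 : forall j, (j < N)%N -> 0 <= x j.
  move=> j Hj; have := In1 (fun k => - (k == j)%:R, 0).
  rewrite dotm_e // oppr_le0; apply; rewrite In_cat; left; rewrite In_map.
  by exists j; split => //; apply: In_mem; rewrite mem_iota.
pose lam m := if m \in s then x (index m s) else 0.
have Lnth : forall j : 'I_N, lam (nth 0%MM s j) = x j.
  move=> j; rewrite /lam mem_nth // index_uniq // msupp_uniq.
exists lam; split.
- move=> m; rewrite /lam; case: ifP => // Hm; apply: Hx0; by rewrite index_mem.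
- rewrite sum_seq_ord; under eq_bigr => j _ do rewrite Lnth.
  have H1 := In1 (fun _ => 1, 1); have H2 := In1 (fun _ => -1, -1).
  have E1 : dotm N (fun _ => 1) x = \sum_(j < N) x j.
    by apply: eq_bigr => j _; rewrite mul1r.
  have E2 : dotm N (fun _ => -1) x = - \sum_(j < N) x j.
    by rewrite /dotm -sumrN; apply: eq_bigr => j _; rewrite mulN1r.
  move: H1 H2; rewrite /= E1 E2 => H1 H2.
  have M1 : List.In (fun _ => 1, 1 : R) Ssys by rewrite /Ssys In_cat; right; left.
  have M2 : List.In (fun _ => -1, -1 : R) Ssys by rewrite /Ssys In_cat; right; right; left.
  have := H1 M1; have := H2 M2; lra.
- move=> i; rewrite sum_seq_ord; under eq_bigr => j _ do rewrite Lnth.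
  have := In1 (fun j => ((nth 0%MM s j) i)%:R, 1).
  have Hin : List.In (fun j => ((nth 0%MM s j) i)%:R, 1 : R) Ssys.
    rewrite In_cat; right; right; right; rewrite In_map.
    by exists i; split => //; apply: In_mem; rewrite mem_enum.
  move=> /(_ Hin) /=; rewrite /dotm => H.
  by rewrite (eq_bigr (fun j : 'I_N => (nth 0%MM s j i)%:R * x j)) // => j _; rewrite mulrC.
Qed.

Definition Inv (g : nat -> R) (h : R) := exists (y : nat -> R) (z : 'I_n -> R) (al be : R),
  [/\ (forall j, 0 <= y j), (forall i, 0 <= z i), 0 <= al /\ 0 <= be,
      (forall k, g k = - y k + (al - be) + \sum_i z i * ((nth 0%MM s k) i)%:R)
    & al - be + \sum_i z i <= h].

Lemma deriv_Inv g h : deriv Ssys g h -> Inv g h.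
Proof.
elim => {g h}.
- move=> g h; rewrite In_cat In_map => -[[j [_ E]]|[E|[E|]]].
  + case: E => -> ->; exists (fun k => (k == j)%:R), (fun _ => 0), 0, 0.
    split; [by move=> k; rewrite ler0n|by []|by []| |].
    * move=> k; rewrite big1 ?subrr ?addr0 // => i _; by rewrite mul0r.
    * by rewrite big1 ?subrr ?addr0.
  + case: E => <- <-; exists (fun _ => 0), (fun _ => 0), 1, 0.
    split; [by []|by []|by rewrite ler01| |].
    * by move=> k; rewrite big1 ?subr0 ?addr0 ?oppr0 ?add0r // => i _; rewrite mul0r.
    * by rewrite big1 ?subr0 ?addr0.
  + case: E => <- <-; exists (fun _ => 0), (fun _ => 0), 0, 1.
    split; [by []|by []|by rewrite ler01| |].
    * by move=> k; rewrite big1 ?sub0r ?addr0 ?oppr0 ?add0r // => i _; rewrite mul0r.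
    * by rewrite big1 ?sub0r ?addr0.
  + move=> /In_map -[i [_ E]]; case: E => -> ->.
    exists (fun _ => 0), (fun i' => (i == i')%:R), 0, 0.
    split; [by []|by move=> i'; rewrite ler0n|by []| |].
    * move=> k; rewrite subrr oppr0 !add0r (bigD1 i) //= eqxx mul1r big1 ?addr0 //.
      by move=> i' /negbTE; rewrite eq_sym => ->; rewrite mul0r.
    * rewrite subrr add0r (bigD1 i) //= eqxx big1 ?addr0 //.
      by move=> i' /negbTE; rewrite eq_sym => ->.
- move=> g1 h1 g2 h2 _ [y1 [z1 [a1 [b1 [Y1 Z1 [A1 B1] G1 H1]]]]]
    _ [y2 [z2 [a2 [b2 [Y2 Z2 [A2 B2] G2 H2]]]]].
  exists (fun j => y1 j + y2 j), (fun i => z1 i + z2 i), (a1 + a2), (b1 + b2); split.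
  + by move=> j; rewrite addr_ge0.
  + by move=> i; rewrite addr_ge0.
  + by split; rewrite addr_ge0.
  + move=> k; rewrite G1 G2 /=.
    have -> : \sum_(i < n) (z1 i + z2 i) * (nth 0%MM s k i)%:R =
      \sum_(i < n) z1 i * (nth 0%MM s k i)%:R + \sum_(i < n) z2 i * (nth 0%MM s k i)%:R.
      by rewrite -big_split; apply: eq_bigr => i _; rewrite mulrDl.
    ring.
  + by rewrite big_split /=; lra.
- move=> c g h Hc _ [y [z [a [b [Y Z [A B] G H]]]]].
  exists (fun j => c * y j), (fun i => c * z i), (c * a), (c * b); split.
  + by move=> j; rewrite mulr_ge0.
  + by move=> i; rewrite mulr_ge0.
  + by split; rewrite mulr_ge0.
  + move=> k; rewrite /= G.
    have -> : \sum_(i < n) c * z i * (nth 0%MM s k i)%:R =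
      c * \sum_(i < n) z i * (nth 0%MM s k i)%:R.
      by rewrite mulr_sumr; apply: eq_bigr => i _; rewrite mulrA.
    ring.
  + rewrite -mulr_sumr -mulrBr -mulrDr; exact: ler_wpM2l.
- move=> g h h' le _ [y [z [a [b [Y Z AB G H]]]]].
  by exists y, z, a, b; split => //; apply: le_trans le.
- move=> g g' h E _ [y [z [a [b [Y Z AB G H]]]]].
  by exists y, z, a, b; split => // k; rewrite -E.
Qed.

Lemma farkas_vec : ~ NP (fun _ => 1) ->
  exists a, feasA (@gR R n f) (@hR R n f) a /\ sR a < 1.
Proof.
move=> nNP.
have [g [h [Hd Hg Hh]]] := FM (infeas nNP).
have [y [z [al [be [Y Z [A B] G H]]]]] := deriv_Inv Hd.
pose mu := be - al.
have Hz : forall m, m \in s -> mu <= dotR z (eR m).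
  move=> m Hm; have Hk : (index m s < N)%N by rewrite index_mem.
  have := G (index m s); rewrite Hg // nth_index // => E.
  have -> : dotR z (eR m) = \sum_i z i * (m i)%:R by [].
  have := Y (index m s); rewrite /mu; lra.
have Sz : 0 <= \sum_i z i by apply: sumr_ge0 => i _.
have Hmu : 0 < mu by rewrite /mu; lra.
exists (fun i => z i / mu); split.
- apply/feas_iff; split; first by move=> i; rewrite divr_ge0 // ltW.
  move=> m Hm; rewrite (_ : dotR _ _ = dotR z (eR m) / mu).
    by rewrite ler_pdivlMr // mul1r; apply: Hz.
  by rewrite /dotR mulr_suml; apply: eq_bigr => i _; rewrite mulrAC.
- rewrite /sR -mulr_suml ltr_pdivrMr // mul1r /mu; lra.
Qed.

End Farkas.

Section Main.
Variables (R : realType) (n : nat) (f : {mpoly R[n]}).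
Local Notation s := (msupp f).
Local Notation NP := (newton_plus f).
Local Notation eR := (expR R).

Local Notation Eset := [set r | r = 0 \/ exists a : 'I_n -> nat, dual1_plus f a /\ r = Defs.ratio f a].

Lemma ratio_le1 u : dual1_plus f u -> Defs.ratio f u <= 1.
Proof.
move=> [_ Hm]; rewrite /Defs.ratio lerBlDr lerDl; apply: divr_ge0 (ltW Hm).
by apply: sumr_ge0 => i _; rewrite /natR ler0n.
Qed.

Lemma Le_ge u : dual1_plus f u -> Defs.ratio f u <= Le f.
Proof.
move=> Hu; apply: ub_le_sup; last by right; exists u.
exists 1 => r [->|[v [Hv ->]]]; [exact: ler01|exact: ratio_le1].
Qed.

Lemma Le_zero : (forall u, dual1_plus f u -> Defs.ratio f u <= 0) -> Le f = 0.
Proof.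
move=> H; apply/eqP; rewrite eq_le; apply/andP; split.
  by apply: ge_sup; [exists 0; left|move=> r [->|[v [Hv ->]]]; [exact: lexx|exact: H]].
apply: ub_le_sup; last by left.
exists 1 => r [->|[v [Hv ->]]]; [exact: ler01|exact: ratio_le1].
Qed.

Lemma dot1 (a : 'I_n -> R) : dotR a (fun _ => 1) = sR a.
Proof. by apply: eq_bigr => i _; rewrite mulr1. Qed.

End Main.

Lemma n0_false (R : realType) (f : {mpoly R[0]}) : f != 0 -> meval (fun _ => 0) f = 0 -> False.
Proof.
move=> Hf; rewrite mevalE.
have Hu := msupp_uniq f.
have Heq : forall m1 m2 : 'X_{1..0}, m1 = m2 by move=> m1 m2; apply/mnmP => -[].
case E: (msupp f) Hu => [|m0 [|m1 t]].
- by move/eqP: E; rewrite msupp_eq0 (negbTE Hf).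
- move=> _; rewrite big_seq1 big_ord0 mulr1 => /eqP.
  by rewrite mcoeff_eq0 E mem_head.
- by rewrite /= (Heq m0 m1) inE eqxx.
Qed.

Unset Implicit Arguments.

Theorem mainTheorem4 (R : realType) (n : nat) (f : {mpoly R[n]}) :
  f != 0 ->
  nondegenerate_newton f ->
  meval (fun _ : 'I_n => (0 : R)) f = 0 ->
  [/\ ~ newton_plus f (fun _ => 1) -> 0 < Le f,
      newton_boundary f (fun _ => 1) ->
        Le f = 0 /\ exists a : 'I_n -> nat, dual1_max f a
    & newton_interior f (fun _ => 1) ->
        Le f = 0 /\ forall a : 'I_n -> nat, ~ dual1_max f a].
Proof.
move=> Hf0 _ Hev; split.
- move=> nNP.
  have [a0 [Fa0 Sa0]] := farkas_vec nNP.
  have [a [Fa Va Da]] := vertex_move (@He_sys R n f) (p := fun _ => 1) (fun _ => ltr01) Fa0.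
  have [u [Du Ru]] := build Hf0 Fa Va.
  apply: lt_le_trans (Le_ge Du); rewrite Ru subr_gt0.
  by move: Da; rewrite !dot1 => Da; apply: le_lt_trans Da Sa0.
- move=> [c [[[y0 Hy0] [B HB]] [NP1 Hmin]]].
  have Hn : (0 < n)%N.
    rewrite lt0n; apply/eqP => En; subst n; exact: n0_false Hf0 Hev.
  pose i0 := Ordinal Hn.
  have Hc0 : forall i, 0 <= c i.
    move=> i; have Hz : newton_plus f (fun j => 1 + 1 * (i == j)%:R).
      by apply: (NP_mono NP1) => j; rewrite mul1r lerDl ler0n.
    by have := Hmin _ Hz; rewrite dotR_linr mul1r dot_e; lra.
  have [i1 Hi1] : exists i, c i != 0.
    apply: contrapT => Hn0.
    have Z : forall i, c i = 0 by move=> i; apply: contrapT => H; apply: Hn0; exists i; apply/eqP.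
    have Dz : forall x, dotR c x = 0 by move=> x; rewrite /dotR big1 // => i _; rewrite Z mul0r.
    pose y := fun _ : 'I_n => 1 + `|B|.
    have Fy : face f c y.
      split; last by move=> z _; rewrite !Dz.
      by apply: (NP_mono NP1) => j; rewrite lerDl.
    have := HB y Fy i0; rewrite /y ger0_norm; last by rewrite addr_ge0.
    by have := ler_norm B; lra.
  pose sg := dotR c (fun _ => 1).
  have Hsg : 0 < sg.
    rewrite /sg dot1 /sR (bigD1 i1) //=; apply: ltr_pwDl.
      by rewrite lt0r Hi1 Hc0.
    by apply: sumr_ge0 => i _.
  pose a0 := fun i => c i / sg.
  have Fa0 : feasA (@gR R n f) (@hR R n f) a0.
    apply/feas_iff; split; first by move=> i; rewrite divr_ge0 // ltW.
    move=> m Hm; rewrite (_ : dotR _ _ = dotR c (expR R m) / sg).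
      by rewrite ler_pdivlMr // mul1r; apply: Hmin; exact: NP_supp.
    by rewrite /dotR mulr_suml; apply: eq_bigr => i _; rewrite mulrAC.
  have Sa0 : dotR a0 (fun _ => 1) = 1.
    rewrite dot1 /sR /a0 -mulr_suml (_ : \sum_i c i = sg) ?divff //.
      exact: lt0r_neq0.
    by rewrite /sg dot1.
  have [a [Fa Va Da]] := vertex_move (@He_sys R n f) (p := fun _ => 1) (fun _ => ltr01) Fa0.
  have [Ha Hm] := (feas_iff f a).1 Fa.
  have Ge : 1 <= dotR a (fun _ => 1) by apply: (NP_ge Ha Hm NP1).
  have [u [Du Ru]] := build Hf0 Fa Va.
  have L0 : Le f = 0.
    apply: Le_zero => v [Dv Hmv].
    rewrite /Defs.ratio subr_le0 ler_pdivlMr // mul1r -dot1; apply: mf_le => //.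
  split => //; exists u; split => //.
  by rewrite Ru L0 -dot1; lra.
- move=> [e He HNP].
  have Hneg : forall u, dual1_plus f u -> Defs.ratio f u < 0.
    move=> u [[[i0 Hi0] _ _] Hmf].
    pose b := natR R u.
    have Hb : forall i, 0 <= b i by move=> i; rewrite /b /natR ler0n.
    pose sg := sR b.
    have Hsg : 0 <= sg by apply: sumr_ge0.
    pose dl := e / (1 + sg).
    have Hdl : 0 < dl by rewrite divr_gt0 // ltr_pwDl.
    have Hdls : dl * sg < e.
      rewrite /dl mulrAC ltr_pdivrMr ?ltr_pwDl //; nra.
    pose y := fun i => 1 + (- dl) * b i.
    have NPy : newton_plus f y.
      apply: HNP => i; rewrite /y.
      have -> : 1 + - dl * b i - 1 = - (dl * b i) by ring.
      rewrite normrN ger0_norm; last by rewrite mulr_ge0 // ltW.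
      apply: le_lt_trans Hdls; apply: ler_wpM2l; first exact: ltW.
      by rewrite /sg /sR (bigD1 i) //= lerDl; apply: sumr_ge0.
    have Mle := mf_le Hb NPy.
    rewrite /y dotR_linr dot1 -/sg in Mle.
    have Hbb : 0 < dotR b b.
      rewrite /dotR (bigD1 i0) //=; apply: ltr_pwDl.
        by rewrite mulr_gt0 // /b /natR ltr0n lt0n.
      by apply: sumr_ge0 => i _; rewrite mulr_ge0.
    have Hlt : mf f b < sg by nra.
    by rewrite /Defs.ratio subr_lt0 ltr_pdivlMr // mul1r.
  have L0 : Le f = 0 by apply: Le_zero => u /Hneg /ltW.
  split => // u [Du Ru]; have := Hneg u Du; rewrite Ru L0 ltxx //.
Qed.
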